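(* Let $M$ be a finitely generated $\mathbb{N}^n$-graded $S$-module generated in squarefree degrees, with minimal $\mathbb{N}^n$-graded free resolution $0\leftarrow M\leftarrow F_0\leftarrow F_1\leftarrow\cdots\leftarrow F_r\leftarrow0$. Then $F_1$ is generated in squarefree degrees if and only if $F_i$ is generated in squarefree degrees for all $i=0,\dots,r$.
   Context: $S=\mathbb{k}[x_1,\dots,x_n]$ with fine $\mathbb{N}^n$-grading. A degree in $\mathbb{N}^n$ is squarefree if all its entries lie in $\{0,1\}$; a graded module is generated in squarefree degrees if it has a homogeneous generating set all of whose degrees are squarefree. *)

(* Defs.v *)
(* Multigraded free S-modules, S = k[x_1..x_n], encoded
   degree-wise by linear algebra over the field k. *)
From HB Require Import structures.
From mathcomp Require Import all_boot all_order all_algebra.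
Set Implicit Arguments. Unset Strict Implicit. Unset Printing Implicit Defensive.
Import GRing.Theory.
Local Open Scope ring_scope.

Definition mdeg (n : nat) := 'I_n -> nat.

Definition degle (n : nat) (a c : mdeg n) : bool := [forall i, (a i <= c i)%N].

Definition sqdeg (n : nat) (b : {ffun 'I_n -> bool}) : mdeg n := fun i => nat_of_bool (b i).

(* The free module F = (+)_j S(-a_j) (basis e_j of degree a_j, j < m).
   Its degree-c component has k-basis { x^(c - a_j) e_j | a_j <= c }, which we
   identify with the coordinate subspace of k^m spanned by those j; the row
   space of [Fc a c] is that subspace.  Multiplication by x^u : F_c -> F_(c+u)
   is then the inclusion of coordinate subspaces. *)
Definition Fc (k : fieldType) (n m : nat) (a : 'I_m -> mdeg n) (c : mdeg n) : 'M[k]_m :=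
  \matrix_(j, l) (((j == l) && degle (a j) c)%:R).

(* The free module with basis degrees a is generated (as a graded module) by
   its homogeneous elements of squarefree degree: every component F_c is the sum
   of the x^(c-b) F_b over squarefree b <= c. *)
Definition free_gen_sqfree (k : fieldType) (n m : nat) (a : 'I_m -> mdeg n) : Prop :=
  forall c : mdeg n,
    (Fc k a c <= \sum_(b : {ffun 'I_n -> bool} | degle (sqdeg b) c) Fc k a (sqdeg b))%MS.

(* The module M = coker (D : F' -> F), F with basis degrees a, F' with basis
   degrees a', D a homogeneous map (row-vector convention, v |-> v *m D), has
   M_c = F_c / D(F'_c).  M is generated by its homogeneous elements of squarefree
   degree: every M_c is the sum of the x^(c-b) M_b over squarefree b <= c. *)
Definition coker_gen_sqfree (k : fieldType) (n m p : nat)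
    (a : 'I_m -> mdeg n) (a' : 'I_p -> mdeg n) (D : 'M[k]_(p, m)) : Prop :=
  forall c : mdeg n,
    (Fc k a c <= (\sum_(b : {ffun 'I_n -> bool} | degle (sqdeg b) c) Fc k a (sqdeg b))
                  + Fc k a' c *m D)%MS.

(* Minimal N^n-graded free resolution  0 <- M <- F_0 <- F_1 <- ... <- F_r <- 0
   with M = coker d_1.  F_i = (+)_(j < m i) S(-a i j);  d i : F_i -> F_(i-1)
   (for i >= 1) sends e_j to sum_l (d i j l) x^(a i j - a (i-1) l) e_l.
   - F_i = 0 for i > r;
   - homogeneity and minimality: a nonzero entry d i j l forces
     a (i-1) l <= a i j strictly (so d_i(F_i) is contained in m F_(i-1));
   - complex: d_(i+1) d_i = 0 for i >= 1;
   - exactness at F_i (i >= 1), checked in every multidegree c. *)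
Definition is_min_res (k : fieldType) (n : nat) (m : nat -> nat) (r : nat)
    (a : forall i, 'I_(m i) -> mdeg n) (d : forall i, 'M[k]_(m i, m i.-1)) : Prop :=
  [/\ (forall i, (r < i)%N -> m i = 0%N),
      (forall i, (0 < i)%N -> forall j l, d i j l != 0 ->
          degle (a i.-1 l) (a i j) && ~~ degle (a i j) (a i.-1 l)),
      (forall i, (0 < i)%N -> d i.+1 *m d i = 0) &
      (forall i, (0 < i)%N -> forall c : mdeg n,
          (Fc k (a i) c :&: kermx (d i) <= Fc k (a i.+1) c *m d i.+1)%MS)].

(* Main.v *)
Require Import Defs.
From HB Require Import structures.
From mathcomp Require Import all_boot all_order all_algebra.
Set Implicit Arguments. Unset Strict Implicit. Unset Printing Implicit Defensive.
Import GRing.Theory.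
Local Open Scope ring_scope.

Definition sqf (n : nat) (x : mdeg n) := forall t, (x t <= 1)%N.

Lemma subE (R : zmodType) p q (A B : 'M[R]_(p, q)) i j : (A - B) i j = A i j - B i j.
Proof. by rewrite !mxE. Qed.

Lemma deltaE (R : nzRingType) p q (i0 i : 'I_p) (j0 j : 'I_q) :
  (delta_mx i0 j0 : 'M[R]_(p, q)) i j = ((i == i0) && (j == j0))%:R.
Proof. by rewrite mxE. Qed.

Lemma degle_refl n (x : mdeg n) : degle x x.
Proof. by apply/forallP => s. Qed.

Lemma mulFc (k : fieldType) n m (a : 'I_m -> mdeg n) c (w : 'rV[k]_m) l :
  (w *m Fc k a c) 0 l = w 0 l * (degle (a l) c)%:R.
Proof.
rewrite !mxE (bigD1 l) //= big1 ?addr0; first by rewrite !mxE eqxx.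
by move=> j /negPf Hj; rewrite !mxE Hj mulr0.
Qed.

Lemma subFcP (k : fieldType) n m (a : 'I_m -> mdeg n) c (v : 'rV[k]_m) :
  (v <= Fc k a c)%MS <-> (forall j, v 0 j != 0 -> degle (a j) c).
Proof.
split.
  case/submxP => w -> j; rewrite mulFc.
  by case: (degle _ _) => //; rewrite mulr0 eqxx.
move=> H; apply/submxP; exists v; apply/rowP => j; rewrite mulFc.
case Hd: (degle (a j) c); first by rewrite mulr1.
rewrite mulr0; case: (eqVneq (v 0 j) 0) => // /H; by rewrite Hd.
Qed.

Lemma coordzero (k : fieldType) n m p (a : 'I_p -> mdeg n) c (w : 'rV[k]_p)
   (D : 'M[k]_(p, m)) j :
  (forall l, D l j != 0 -> ~~ degle (a l) c) -> (w *m Fc k a c *m D) 0 j = 0.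
Proof.
move=> H; rewrite mxE big1 // => l _; rewrite mulFc.
case: (eqVneq (D l j) 0) => [->|/H Hl]; first by rewrite mulr0.
by rewrite (negbTE Hl) mulr0 mul0r.
Qed.

Lemma free_sqf_iff (k : fieldType) n m (a : 'I_m -> mdeg n) :
  free_gen_sqfree k a <-> (forall j, sqf (a j)).
Proof.
split.
  move=> H j.
  have ej : ((delta_mx 0 j : 'rV[k]_m) <= Fc k a (a j))%MS.
    apply/subFcP => l; rewrite mxE eqxx /=.
    by case: (eqVneq l j) => [->|]; [rewrite degle_refl | rewrite eqxx].
  case/sub_sumsmxP: (submx_trans ej (H (a j))) => u Hu.
  case: (boolP [exists b, degle (a j) (sqdeg b)]).
    case/existsP => b /forallP Hb t.
    exact: leq_trans (Hb t) (leq_b1 _).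
  rewrite negb_exists => /forallP Hn; exfalso.
  have : (delta_mx 0 j : 'rV[k]_m) 0 j = 0.
    rewrite Hu summxE big1 // => b _; rewrite mulFc.
    by rewrite (negbTE (Hn b)) mulr0.
  by rewrite mxE !eqxx /= => /eqP; rewrite oner_eq0.
move=> Hs c; apply/row_subP => l.
case Hd: (degle (a l) c); last first.
  have -> : row l (Fc k a c) = 0.
    by apply/rowP => j; rewrite !mxE Hd andbF.
  exact: sub0mx.
pose b := [ffun t => (a l t != 0%N)].
have Hab : forall t, sqdeg b t = a l t.
  move=> t; rewrite /sqdeg ffunE.
  by have := Hs l t; case: (a l t) => [|[|]].
apply: (sumsmx_sup b).
  apply/forallP => t; rewrite Hab; exact: (forallP Hd t).
apply/subFcP => j; rewrite !mxE.
case: (eqVneq l j) => [<- _|]; last by rewrite eqxx.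
by apply/forallP => t; rewrite Hab.
Qed.

Lemma step (k : fieldType) (n : nat) (m : nat -> nat)
    (a : forall i, 'I_(m i) -> mdeg n) (d : forall i, 'M[k]_(m i, m i.-1)) i :
  (forall i, (0 < i)%N -> forall j l, d i j l != 0 ->
          degle (a i.-1 l) (a i j) && ~~ degle (a i j) (a i.-1 l)) ->
  (forall i, (0 < i)%N -> d i.+1 *m d i = 0) ->
  (forall i, (0 < i)%N -> forall c : mdeg n,
          (Fc k (a i) c :&: kermx (d i) <= Fc k (a i.+1) c *m d i.+1)%MS) ->
  (0 < i)%N -> (forall j, sqf (a i j)) -> forall j, sqf (a i.+1 j).
Proof.
move=> Hmin Hcx Hex i0 Hs j t; rewrite leqNgt; apply/negP => Ht.
set c := a i.+1 j.
pose c' : mdeg n := fun s => if s == t then (c s).-1 else c s.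
have Hcc' : ~~ degle c c'.
  apply/negP => /forallP /(_ t); rewrite /c' eqxx.
  move=> H; have : (c t < c t)%N by apply: leq_ltn_trans H _; rewrite ltn_predL; exact: ltnW Ht.
  by rewrite ltnn.
have Hc'c : forall x, degle x c' -> degle x c.
  move=> x /forallP Hx; apply/forallP => s; have := Hx s; rewrite /c'.
  case: (s == t) => // H; exact: leq_trans H (leq_pred _).
pose v := row j (d i.+1).
have Hv1 : (v <= Fc k (a i) c')%MS.
  apply/subFcP => l; rewrite mxE => /(Hmin _ (ltn0Sn i)) /andP [Hle _].
  apply/forallP => s; rewrite /c'; case: (eqVneq s t) => [->|_].
    apply: leq_trans (Hs l t) _; rewrite -ltnS prednK //; exact: ltnW Ht.
  exact: (forallP Hle s).
have Hv2 : (v <= kermx (d i))%MS.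
  by apply/sub_kermxP; rewrite /v -row_mul Hcx // row0.
have : (v <= Fc k (a i.+1) c' *m d i.+1)%MS.
  by apply: submx_trans (Hex i i0 c'); rewrite sub_capmx Hv1 Hv2.
case/submxP => w Hw.
pose w' := w *m Fc k (a i.+1) c'.
pose z := (delta_mx 0 j : 'rV[k]_(m i.+1)) - w'.
have Hz1 : (z <= Fc k (a i.+1) c)%MS.
  apply/subFcP => l; rewrite subE mulFc deltaE.
  case: (eqVneq l j) => [->|nlj]; first by rewrite degle_refl.
  rewrite eqxx /= sub0r oppr_eq0.
  case Hd: (degle (a i.+1 l) c'); first by rewrite Hc'c.
  by rewrite mulr0 eqxx.
have Hz2 : z *m d i.+1 = 0.
  by rewrite mulmxBl -rowE -/v Hw /w' mulmxA subrr.
have : (z <= Fc k (a i.+2) c *m d i.+2)%MS.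
  by apply: submx_trans (Hex i.+1 isT c); rewrite sub_capmx Hz1; apply/sub_kermxP.
case/submxP => y Hy.
have Hz0 : z 0 j = 0.
  rewrite Hy mulmxA coordzero // => l /(Hmin i.+2 isT) /andP [_ H].
  exact: H.
move: Hz0; rewrite subE mulFc deltaE !eqxx /= (negbTE Hcc') mulr0 subr0.
by move/eqP; rewrite oner_eq0.
Qed.

Lemma base (k : fieldType) (n : nat) (m : nat -> nat)
    (a : forall i, 'I_(m i) -> mdeg n) (d : forall i, 'M[k]_(m i, m i.-1)) :
  (forall i, (0 < i)%N -> forall j l, d i j l != 0 ->
          degle (a i.-1 l) (a i j) && ~~ degle (a i j) (a i.-1 l)) ->
  coker_gen_sqfree (a 0%N) (a 1%N) (d 1%N) -> forall j, sqf (a 0%N j).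
Proof.
move=> Hmin Hc j.
case: (boolP [forall t, (a 0%N j t <= 1)%N]) => [/forallP //|Hn].
exfalso.
have Hnb : forall b, ~~ degle (a 0%N j) (sqdeg b).
  move=> b; apply/negP => /forallP Hb; apply: (negP Hn); apply/forallP => t.
  exact: leq_trans (Hb t) (leq_b1 _).
have ej : ((delta_mx 0 j : 'rV[k]_(m 0%N)) <= Fc k (a 0%N) (a 0%N j))%MS.
  apply/subFcP => l; rewrite mxE eqxx /=.
  by case: (eqVneq l j) => [->|]; [rewrite degle_refl | rewrite eqxx].
case/sub_addsmxP: (submx_trans ej (Hc (a 0%N j))) => u Hu.
have Hx : (u.1 *m (\sum_(b : {ffun 'I_n -> bool} | degle (sqdeg b) (a 0%N j))
             Fc k (a 0%N) (sqdeg b))%MS <=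
          \sum_(b : {ffun 'I_n -> bool} | degle (sqdeg b) (a 0%N j))
             Fc k (a 0%N) (sqdeg b))%MS by apply: submxMl.
case/sub_sumsmxP: Hx => v Hv.
have : (delta_mx 0 j : 'rV[k]_(m 0%N)) 0 j = 0.
  rewrite Hu mxE Hv summxE big1 ?add0r.
    rewrite mulmxA coordzero // => l /(Hmin 1%N isT) /andP [_ H]; exact: H.
  by move=> b _; rewrite mulFc (negbTE (Hnb b)) mulr0.
by rewrite mxE !eqxx /= => /eqP; rewrite oner_eq0.
Qed.

Theorem proposition3p6 (k : fieldType) (n r : nat) (m : nat -> nat)
    (a : forall i, 'I_(m i) -> mdeg n) (d : forall i, 'M[k]_(m i, m i.-1)) :
  is_min_res r a d ->
  coker_gen_sqfree (a 0%N) (a 1%N) (d 1%N) ->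
  (free_gen_sqfree k (a 1%N) <-> (forall i, (i <= r)%N -> free_gen_sqfree k (a i))).
Proof.
move=> [Hr Hmin Hcx Hex] Hcok; split.
  move=> H1.
  have S1 := (free_sqf_iff k (a 1%N)).1 H1.
  have Hall : forall i, (0 < i)%N -> forall j, sqf (a i j).
    elim=> [//|i IH] _.
    case: i IH => [|i] IH; first exact: S1.
    exact: (step Hmin Hcx Hex (ltn0Sn i) (IH isT)).
  move=> i _; apply/free_sqf_iff.
  case: i => [|i]; first exact: (base Hmin Hcok).
  exact: Hall.
move=> H; case: (leqP 1 r) => [Hr1|Hr0]; first exact: H.
have Hm : m 1%N = 0%N by apply: Hr; case: r Hr0 H.
apply/free_sqf_iff => j; exfalso.
have := ltn_ord j; move: (nat_of_ord j) => x; by rewrite Hm.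
Qed.
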